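(* Let $\mathcal A$ be a Banach algebra and $I$ a closed two-sided ideal of $\mathcal A$ with a bounded approximate identity. If $I$ and $\mathcal A/I$ are ideally amenable, then $\mathcal A$ is ideally amenable.
   Context: A Banach algebra $\mathcal B$ is ideally amenable if for every closed two-sided ideal $K$ of $\mathcal B$, every derivation $D:\mathcal B\to K^*$ (continuous linear map with $D(ab)=a\cdot D(b)+D(a)\cdot b$, where $K^*$ carries the actions $\langle x,a\cdot f\rangle=\langle xa,f\rangle$, $\langle x,f\cdot a\rangle=\langle ax,f\rangle$) is inner, i.e. $D(a)=a\cdot f-f\cdot a$ for some $f\in K^*$. *)

(* Defs.v *)
From mathcomp Require Import all_boot all_algebra.
From mathcomp Require Import all_classical all_reals all_analysis.
From mathcomp Require Export complex.
Export GRing.Theory Num.Theory.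

Set Implicit Arguments.
Unset Strict Implicit.
Unset Printing Implicit Defensive.

Local Open Scope ring_scope.
Local Open Scope classical_set_scope.

Section BanachAlgebra.
Variables (R : realType) (V : completeNormedModType R[i]).

Definition is_banach_algebra (mul : V -> V -> V) : Prop :=
  [/\ (forall a b c, mul a (mul b c) = mul (mul a b) c),
      (forall (k : R[i]) a b c, mul (k *: a + b) c = k *: mul a c + mul b c),
      (forall (k : R[i]) a b c, mul a (k *: b + c) = k *: mul a b + mul a c) &
      (forall a b, `|mul a b| <= `|a| * `|b|)].

Definition subspace (S : set V) : Prop :=
  S 0 /\ forall (k : R[i]) x y, S x -> S y -> S (k *: x + y).

Definition closed_ideal_in (mul : V -> V -> V) (S K : set V) : Prop :=
  [/\ K `<=` S, subspace K, closed K &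
      forall a x, S a -> K x -> K (mul a x) /\ K (mul x a)].

Definition closed_ideal (mul : V -> V -> V) (I : set V) : Prop :=
  closed_ideal_in mul setT I.

(* f represents an element of K^* : linear and bounded on K
   (values of f outside K are irrelevant). *)
Definition dual_elt (K : set V) (f : V -> R[i]) : Prop :=
  (forall (k : R[i]) x y, K x -> K y -> f (k *: x + y) = k * f x + f y) /\
  exists C : R[i], forall x, K x -> `|f x| <= C * `|x|.

(* D represents a continuous derivation from the algebra S into K^*,
   where  <x, D a> = D a x,  <x, a.f> = <xa, f>,  <x, f.a> = <ax, f>. *)
Definition derivation_into_dual (mul : V -> V -> V) (S K : set V)
    (D : V -> V -> R[i]) : Prop :=
  [/\ (forall a, S a -> dual_elt K (D a)),
      (forall (k : R[i]) a b x, S a -> S b -> K x ->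
          D (k *: a + b) x = k * D a x + D b x),
      (exists C : R[i], forall a x, S a -> K x -> `|D a x| <= C * `|a| * `|x|) &
      (forall a b x, S a -> S b -> K x ->
          D (mul a b) x = D b (mul x a) + D a (mul b x))].

(* D is inner: D a = a.f - f.a for some f in K^* *)
Definition inner_derivation (mul : V -> V -> V) (S K : set V)
    (D : V -> V -> R[i]) : Prop :=
  exists f, dual_elt K f /\
    forall a x, S a -> K x -> D a x = f (mul x a) - f (mul a x).

Definition ideally_amenable_on (mul : V -> V -> V) (S : set V) : Prop :=
  forall K, closed_ideal_in mul S K ->
  forall D, derivation_into_dual mul S K D -> inner_derivation mul S K D.

Definition ideally_amenable (mul : V -> V -> V) : Prop :=
  ideally_amenable_on mul setT.

Definition has_bai (mul : V -> V -> V) (I : set V) : Prop :=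
  exists (L : Type) (le : L -> L -> Prop) (e : L -> V),
  [/\ inhabited L /\ (forall l, le l l),
      (forall l1 l2 l3, le l1 l2 -> le l2 l3 -> le l1 l3) /\
      (forall l1 l2, exists l3, le l1 l3 /\ le l2 l3),
      (forall l, I (e l)),
      (exists M : R[i], forall l, `|e l| <= M) &
      (forall x, I x -> forall eps : R[i], 0 < eps -> exists l0, forall l,
          le l0 l -> `|mul (e l) x - x| < eps /\ `|mul x (e l) - x| < eps)].

End BanachAlgebra.

Section Quotient.
Variables (R : realType) (V W : completeNormedModType R[i]).

(* (W, mulW) together with q is (an isometric copy of) the quotient Banach
   algebra V / I : q is a surjective algebra homomorphism with kernel I and
   ||q a|| = inf { ||a + y|| : y in I } (quotient norm). *)
Definition is_quotient_algebra (mulV : V -> V -> V) (I : set V)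
    (mulW : W -> W -> W) (q : V -> W) : Prop :=
  [/\ (forall (k : R[i]) a b, q (k *: a + b) = k *: q a + q b),
      (forall a b, q (mulV a b) = mulW (q a) (q b)),
      (forall w, exists a, q a = w),
      (forall a, q a = 0 <-> I a) &
      (forall a, (forall y, I y -> `|q a| <= `|a + y|) /\
         (forall eps : R[i], 0 < eps -> exists y, I y /\ `|a + y| < `|q a| + eps))].

End Quotient.

(* Main.v *)
Require Import Defs.
From mathcomp Require Import all_boot all_algebra.
From mathcomp Require Import all_classical all_reals all_analysis.
From mathcomp Require Import complex.
From mathcomp Require Import ring lra.
Import GRing.Theory Num.Theory.
Import order.Order.TTheory.
Local Open Scope ring_scope.
Local Open Scope classical_set_scope.
Local Open Scope complex_scope.

Lemma rC0 (R : realType) : (0 : R)%:C = 0 :> R[i]. Proof. by []. Qed.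
Lemma rC1 (R : realType) : (1 : R)%:C = 1 :> R[i]. Proof. by []. Qed.
Lemma rCD (R : realType) (a b : R) : (a + b)%:C = a%:C + b%:C :> R[i].
Proof. by apply/eqP; rewrite eq_complex /= ?(mul0r, mulr0, addr0, subr0, oppr0) !eqxx. Qed.
Lemma rCM (R : realType) (a b : R) : (a * b)%:C = a%:C * b%:C :> R[i].
Proof. by apply/eqP; rewrite eq_complex /= ?(mul0r, mulr0, addr0, subr0, oppr0) !eqxx. Qed.
Lemma rCN (R : realType) (a : R) : (- a)%:C = - a%:C :> R[i].
Proof. by apply/eqP; rewrite eq_complex /= ?(mul0r, mulr0, addr0, subr0, oppr0) !eqxx. Qed.
Lemma rCV (R : realType) (a : R) : (a^-1)%:C = (a%:C)^-1 :> R[i].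
Proof. by rewrite fmorphV. Qed.

Section RealHB.
Variables (R : realType) (V : lmodType R[i]).

Variables (K L : set V) (p : V -> R) (u : V -> R).
Hypothesis Klin : forall (t : R) x y, K x -> K y -> K (t%:C *: x + y).
Hypothesis LK : L `<=` K.
Hypothesis L0 : L 0.
Hypothesis Llin : forall (t : R) x y, L x -> L y -> L (t%:C *: x + y).
Hypothesis ulin : forall (t : R) x y, L x -> L y ->
  u (t%:C *: x + y) = t * u x + u y.
Hypothesis udom : forall x, L x -> u x <= p x.
Hypothesis pD : forall x y, p (x + y) <= p x + p y.
Hypothesis pZ : forall (t : R) x, 0 <= t -> p (t%:C *: x) = t * p x.

Definition good (G : set (V * R)) :=
  [/\ G (0, 0),
      forall (t : R) x r y s, G (x, r) -> G (y, s) ->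
        G (t%:C *: x + y, t * r + s),
      forall x r s, G (x, r) -> G (x, s) -> r = s,
      forall x r, G (x, r) -> r <= p x &
      forall x r, G (x, r) -> K x].

Definition G0 : set (V * R) := [set xr | L xr.1 /\ xr.2 = u xr.1].

Lemma u0 : u 0 = 0.
Proof.
have := @ulin (-1) 0 0 L0 L0; rewrite scaler0 addr0 => ->.
by rewrite mulN1r addNr.
Qed.

Lemma good_G0 : good G0.
Proof.
split.
- by split => //=; rewrite u0.
- move=> t x r y s [/= Lx ->] [/= Ly ->]; split => //=; first exact: Llin.
  by rewrite ulin.
- by move=> x r s [_ /= ->] [_ /= ->].
- by move=> x r [/= Lx ->]; exact: udom.
- by move=> x r [/= Lx _]; exact: LK.
Qed.


Lemma scale_inv (tau : R) (x w : V) : tau != 0 ->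
  tau%:C *: ((tau^-1)%:C *: x + w) = x + tau%:C *: w.
Proof.
move=> h; rewrite scalerDr scalerA -rCM mulfV // rC1 scale1r //.
Qed.

Section Ext.
Variable G : set (V * R).
Hypothesis gG : good G.
Variable z : V.
Hypothesis Kz : K z.
Hypothesis nz : ~ exists r, G (z, r).

Let S1 := [set v | exists y s, G (y, s) /\ v = s - p (y - z)].
Let c := sup S1.

Lemma key y s y' s' : G (y,s) -> G (y',s') -> s - p (y - z) <= p (y' + z) - s'.
Proof.
case: gG => _ Gl _ Gd _ Gy Gy'.
have := Gd _ _ (Gl 1 _ _ _ _ Gy Gy').
rewrite rC1 scale1r mul1r => h.
have : p (y + y') <= p (y - z) + p (y' + z).
  have -> : y + y' = (y - z) + (y' + z) by rewrite addrA addrAC subrK.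
  exact: pD.
move=> h2; lra.
Qed.

Lemma hasS1 : has_sup S1.
Proof.
case: gG => G00 _ _ _ _; split.
  by exists (0 - p (0 - z)), 0, 0.
exists (p (0 + z) - 0) => v [y [s [Gy ->]]].
exact: key Gy G00.
Qed.

Lemma c_ge y s : G (y, s) -> s - p (y - z) <= c.
Proof. by move=> Gy; apply: sup_upper_bound hasS1 _ _; exists y, s. Qed.

Lemma c_le y s : G (y, s) -> c <= p (y + z) - s.
Proof.
move=> Gy; apply: ge_sup; first by case: hasS1.
by move=> v [y' [s' [Gy' ->]]]; exact: key Gy' Gy.
Qed.

Definition Gext : set (V * R) :=
  [set xr | exists x r (t : R), G (x, r) /\ xr = (x + t%:C *: z, r + t * c)].

Lemma good_Gext : good Gext.
Proof.
case: gG => G00 Gl Gf Gd GK; split.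
- by exists 0, 0, 0; rewrite rC0 scale0r mul0r !addr0.
- move=> k x r y s [x1 [r1 [t1 [G1 [-> ->]]]]] [x2 [r2 [t2 [G2 [-> ->]]]]].
  exists (k%:C *: x1 + x2), (k * r1 + r2), (k * t1 + t2); split.
    exact: Gl.
  congr pair.
    rewrite rCD rCM scalerDr scalerDl scalerA.
    by rewrite addrACA.
  lra.
- move=> x r s [x1 [r1 [t1 [G1 [-> ->]]]]] [x2 [r2 [t2 [G2 []]]]].
  move=> E ->.
  have [et|nt] := eqVneq t1 t2.
    subst t2; move: E => /addIr E; subst x2.
    by rewrite (Gf _ _ _ G1 G2).
  exfalso; apply: nz.
  have d0 : t2 - t1 != 0 by rewrite subr_eq0 eq_sym.
  have Gd1 := Gl (-1) _ _ _ _ G2 G1.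
  have Gd2 := Gl ((t2 - t1)^-1) _ _ _ _ Gd1 G00.
  eexists; move: Gd2; congr (G (_, _)).
  have -> : (-1)%:C *: x2 + x1 = (t2 - t1)%:C *: z.
    rewrite rCN rC1 scaleN1r rCD rCN scalerDl scaleNr.
    rewrite -[x1](addrK (t1%:C *: z)) E.
    by rewrite -addrA addKr.
  by rewrite addr0 scalerA -rCM mulVf // rC1 scale1r.
- move=> x r [x1 [r1 [t1 [G1 [-> ->]]]]].
  case: (ltgtP t1 0) => ht.
  + have tau0 : 0 < - t1 by rewrite oppr_gt0.
    have Gs := Gl ((- t1)^-1) _ _ _ _ G1 G00.
    rewrite !addr0 in Gs.
    have := @c_ge _ _ Gs.
    have hp := pZ (- t1) (((- t1)^-1)%:C *: x1 - z) (ltW tau0).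
    rewrite scale_inv ?lt0r_neq0 // in hp.
    move=> h1.
    have h2 : - t1 * ((- t1)^-1 * r1 - p ((- t1)^-1%:C *: x1 - z)) <= - t1 * c.
      by rewrite ler_pM2l.
    rewrite mulrBr mulrA mulfV ?lt0r_neq0 // mul1r -hp in h2.
    rewrite rCN scaleNr in h2.
    rewrite scalerN opprK in h2; lra.
  + have Gs := Gl (t1^-1) _ _ _ _ G1 G00.
    rewrite !addr0 in Gs.
    have := @c_le _ _ Gs.
    have hp := pZ t1 ((t1^-1)%:C *: x1 + z) (ltW ht).
    rewrite scale_inv ?lt0r_neq0 // in hp.
    move=> h1.
    have h2 : t1 * c <= t1 * (p (t1^-1%:C *: x1 + z) - t1^-1 * r1).
      by rewrite ler_pM2l.
    rewrite mulrBr mulrA mulfV ?lt0r_neq0 // mul1r -hp in h2.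
    lra.
  + subst t1; rewrite rC0 scale0r mul0r !addr0; exact: Gd G1.
- move=> x r [x1 [r1 [t1 [G1 [-> _]]]]].
  rewrite addrC; apply: Klin => //; exact: GK G1.
Qed.

Lemma Gext_proper : G `<` Gext.
Proof.
split.
  move=> [x r] Gx; exists x, r, 0; split => //.
  by rewrite rC0 scale0r mul0r !addr0.
move=> sub; apply: nz; exists c.
have : Gext (z, c).
  exists 0, 0, 1; split; first by case: gG.
  by rewrite rC1 scale1r !add0r mul1r.
by move/sub.
Qed.

End Ext.


Definition PZ (X : set (V * R)) := good (G0 `|` X).

Lemma chain_pair (F : set (set (V * R))) : F `<=` PZ -> total_on F subset ->
  forall w1 w2, (G0 `|` \bigcup_(X in F) X) w1 -> (G0 `|` \bigcup_(X in F) X) w2 ->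
  exists H, [/\ good H, H w1, H w2 & H `<=` G0 `|` \bigcup_(X in F) X].
Proof.
move=> FP tot w1 w2 h1 h2.
case: h1 => [g1|[X FX Xw1]]; case: h2 => [g2|[Y FY Yw2]].
- exists G0; split; [exact: good_G0 | by [] | by [] | exact: subsetUl].
- exists (G0 `|` Y); split; [exact: FP | by left | by right | ].
  by move=> w [?|Yw]; [left | right; exists Y].
- exists (G0 `|` X); split; [exact: FP | by right | by left | ].
  by move=> w [?|Xw]; [left | right; exists X].
- case: (tot X Y FX FY) => [XY|YX].
  + exists (G0 `|` Y); split; [exact: FP | by right; apply: XY | by right | ].
    by move=> w [?|Yw]; [left | right; exists Y].
  + exists (G0 `|` X); split; [exact: FP | by right | by right; apply: YX | ].
    by move=> w [?|Xw]; [left | right; exists X].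
Qed.

Lemma chain_good (F : set (set (V * R))) :
  F `<=` PZ -> total_on F subset -> PZ (\bigcup_(X in F) X).
Proof.
move=> FP tot; have cp := @chain_pair F FP tot.
split.
- by left; split => //=; rewrite u0.
- move=> t x r y s h1 h2; have [H [gH H1 H2 HS]] := cp _ _ h1 h2.
  apply: HS; case: gH => _ Hl _ _ _; exact: Hl.
- move=> x r s h1 h2; have [H [gH H1 H2 HS]] := cp _ _ h1 h2.
  case: gH => _ _ Hf _ _; exact: Hf H1 H2.
- move=> x r h1; have [H [gH H1 H2 HS]] := cp _ _ h1 h1.
  case: gH => _ _ _ Hd _; exact: Hd H1.
- move=> x r h1; have [H [gH H1 H2 HS]] := cp _ _ h1 h1.
  case: gH => _ _ _ _ HK; exact: HK H1.
Qed.

Theorem real_HB_ex : exists U : V -> R,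
  [/\ forall (t : R) x y, K x -> K y -> U (t%:C *: x + y) = t * U x + U y,
      forall x, K x -> U x <= p x & forall x, L x -> U x = u x].
Proof.
have [A [PA maxA]] := Zorn_bigcup chain_good.
set G := G0 `|` A.
have full : forall z, K z -> exists r, G (z, r).
  move=> z Kz; apply: contrapT => nz.
  have [sub nsub] := @Gext_proper G PA z nz.
  apply: (maxA (Gext G z)).
    split; first by move=> w Aw; apply: sub; right.
    by move=> h; apply: nsub => w /h Aw; right.
  rewrite /PZ setUidr; first exact: (@good_Gext G PA z Kz nz).
  by move=> w G0w; apply: sub; left.
case: PA => G00 Gl Gf Gd GK.
pose U x := xget 0 [set r | G (x, r)].
have GU : forall x, K x -> G (x, U x) by move=> x /full h; exact: xgetPex h.
exists U; split.
- move=> t x y Kx Ky; apply: (Gf _ _ _ (GU _ (Klin t x y Kx Ky))).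
  exact: Gl (GU _ Kx) (GU _ Ky).
- by move=> x Kx; exact: Gd (GU _ Kx).
- move=> x Lx; apply: (Gf _ _ _ (GU _ (LK _ Lx))).
  by left.
Qed.

End RealHB.

Section ComplexHB.
Variables (R : realType) (A : normedModType R[i]).

Lemma ReD (a b : R[i]) : complex.Re (a + b) = complex.Re a + complex.Re b.
Proof. by case: a => ? ?; case: b. Qed.
Lemma ReN (a : R[i]) : complex.Re (- a) = - complex.Re a.
Proof. by case: a. Qed.
Lemma ReMC (t : R) (a : R[i]) : complex.Re (t%:C * a) = t * complex.Re a.
Proof. by case: a => x y /=; rewrite mul0r subr0. Qed.
Lemma ReC (t : R) : complex.Re (t%:C) = t.
Proof. by []. Qed.
Lemma Re_iC (t : R) : complex.Re ('i%C * t%:C) = 0.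
Proof. by rewrite /= !mul0r mul1r subr0. Qed.
Lemma Re_iM (w : R[i]) : complex.Re ('i%C * w) = - complex.Im w.
Proof. by case: w => a b /=; rewrite mul0r mul1r sub0r. Qed.
Lemma ge0_ReC {z : R[i]} : 0 <= z -> (complex.Re z)%:C = z.
Proof. by case: z => a b; rewrite lecE /= => /andP[/eqP -> _]. Qed.
Lemma Re_le_norm (z : R[i]) : complex.Re z <= complex.Re `|z|.
Proof.
case: z => a b; rewrite normc_def /=.
apply: le_trans (ler_norm a) _; rewrite -sqrtr_sqr; apply: ler_wsqrtr.
by rewrite lerDl sqr_ge0.
Qed.
Lemma Re_le {a b : R[i]} : a <= b -> complex.Re a <= complex.Re b.
Proof. by rewrite lecE => /andP[]. Qed.

Variables (K L : set A) (f : A -> R[i]) (c : R[i]).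
Hypothesis K0 : K 0.
Hypothesis Klin : forall (k : R[i]) x y, K x -> K y -> K (k *: x + y).
Hypothesis L0 : L 0.
Hypothesis Llin : forall (k : R[i]) x y, L x -> L y -> L (k *: x + y).
Hypothesis LK : L `<=` K.
Hypothesis flin : forall (k : R[i]) x y, L x -> L y -> f (k *: x + y) = k * f x + f y.
Hypothesis c0 : 0 <= c.
Hypothesis fb : forall x, L x -> `|f x| <= c * `|x|.

Theorem complex_HB : exists g : A -> R[i],
  [/\ forall (k : R[i]) x y, K x -> K y -> g (k *: x + y) = k * g x + g y,
      forall x, K x -> `|g x| <= c * `|x| & forall x, L x -> g x = f x].
Proof.
pose u x := complex.Re (f x).
pose p (x : A) := complex.Re (c * `|x|).
have pD : forall x y, p (x + y) <= p x + p y.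
  move=> x y; rewrite /p -ReD; apply: Re_le; rewrite -mulrDr.
  by apply: ler_wpM2l => //; exact: ler_normD.
have pZ : forall (t : R) x, 0 <= t -> p (t%:C *: x) = t * p x.
  by move=> t x t0; rewrite /p normrZ ger0_norm ?ler0c // mulrCA ReMC.
have ulin : forall (t : R) x y, L x -> L y -> u (t%:C *: x + y) = t * u x + u y.
  by move=> t x y Lx Ly; rewrite /u flin // ReD ReMC.
have ud : forall x, L x -> u x <= p x.
  move=> x Lx; exact: (le_trans (Re_le_norm (f x)) (Re_le (fb x Lx))).
have [U [UL Ud Uu]] := @real_HB_ex R A K L p u
  (fun t x y => Klin t%:C x y) LK L0 (fun t x y => Llin t%:C x y) ulin ud pD pZ.
have U0 : U 0 = 0.
  by have := UL (-1) 0 0 K0 K0; rewrite scaler0 addr0 mulN1r addNr.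
have UD : forall x y, K x -> K y -> U (x + y) = U x + U y.
  by move=> x y Kx Ky; have := UL 1 x y Kx Ky; rewrite rC1 scale1r mul1r.
have UZ : forall (t : R) x, K x -> U (t%:C *: x) = t * U x.
  by move=> t x Kx; have := UL t x 0 Kx K0; rewrite !addr0 U0 addr0.
have KZ : forall k x, K x -> K (k *: x).
  by move=> k x Kx; have := Klin k x 0 Kx K0; rewrite addr0.
have KD : forall x y, K x -> K y -> K (x + y).
  by move=> x y Kx Ky; have := Klin 1 x y Kx Ky; rewrite scale1r.
have UN : forall x, K x -> U (- x) = - U x.
  by move=> x Kx; rewrite -scaleN1r -rC1 -rCN UZ // mulN1r.
pose g x := (U x)%:C - 'i%C * (U ('i%C *: x))%:C.
have gD : forall x y, K x -> K y -> g (x + y) = g x + g y.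
  move=> x y Kx Ky; rewrite /g scalerDr !UD; try by [|apply: KZ].
  rewrite !rCD; ring.
have gZ : forall (t : R) x, K x -> g (t%:C *: x) = t%:C * g x.
  move=> t x Kx.
  have E : 'i%C *: (t%:C *: x) = t%:C *: ('i%C *: x) by rewrite !scalerA mulrC.
  rewrite /g E !UZ; try by [|apply: KZ].
  rewrite !rCM; ring.
have h : 'i%C * 'i%C = -1 :> R[i] by rewrite -expr2 sqr_i.
have gi : forall x, K x -> g ('i%C *: x) = 'i%C * g x.
  move=> x Kx; rewrite /g scalerA h scaleN1r UN // rCN.
  by rewrite mulrBr mulrA h; ring.
have gl : forall (k : R[i]) x y, K x -> K y -> g (k *: x + y) = k * g x + g y.
  move=> k x y Kx Ky.
  have Ek : k *: x = (complex.Re k)%:C *: x + (complex.Im k)%:C *: ('i%C *: x).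
    by rewrite scalerA -scalerDl [_ * 'i%C]mulrC -complexE.
  have KiX : K ('i%C *: x) by apply: KZ.
  rewrite Ek !gD; try by [|apply: KZ | apply: KD; apply: KZ].
  rewrite !gZ // gi //.
  by rewrite {3}[k]complexE; ring.
have g0 : g 0 = 0 by rewrite /g scaler0 U0 mulr0 subr0.
have Reg : forall x, complex.Re (g x) = U x.
  by move=> x; rewrite /g ReD ReN Re_iC oppr0 addr0.
exists g; split => //.
- move=> x Kx; set w := g x.
  have [->|w0] := eqVneq w 0; first by rewrite normr0 mulr_ge0.
  have nw0 : `|w| != 0 by rewrite normr_eq0.
  pose lam := w^-1 * `|w|.
  have glam : g (lam *: x) = `|w|.
    have := gl lam x 0 Kx K0; rewrite addr0 g0 addr0 => ->.
    by rewrite /lam -/w mulrAC mulVf // mul1r.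
  have nlam : `|lam| = 1 by rewrite /lam normrM normrV ?unitfE // normr_id mulVf.
  have := Ud _ (KZ lam x Kx); rewrite -Reg glam /p normrZ nlam mul1r => hle.
  rewrite -(ge0_ReC (normr_ge0 w)) -(ge0_ReC (mulr_ge0 c0 (normr_ge0 x))).
  by rewrite lecR.
- move=> x Lx.
  have f0 : f 0 = 0.
    by have := flin (-1) 0 0 L0 L0; rewrite scaler0 addr0 mulN1r addNr.
  have fi : f ('i%C *: x) = 'i%C * f x.
    by have := flin 'i%C x 0 Lx L0; rewrite !addr0 f0 addr0.
  have Li : L ('i%C *: x) by have := Llin 'i%C x 0 Lx L0; rewrite addr0.
  rewrite /g !Uu // /u fi [RHS]complexE Re_iM rCN mulrN opprK.
  done.
Qed.

End ComplexHB.

Lemma half_small (R : realType) (t : R) : 0 < t ->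
  exists N, forall n, (N <= n)%N -> (2^-1 : R) ^+ n < t.
Proof.
move=> t0.
have h : `|(2^-1 : R)| < 1 by rewrite ger0_norm // invf_lt1 // ltr1n.
have := (cvgrPdist_lt _ _).1 (cvg_expr h) t t0.
case=> N _ hN; exists N => n Nn.
by have := hN n Nn; rewrite /= sub0r normrN ger0_norm.
Qed.

Lemma nz_small (K : numFieldType) (V : normedZmodType K) (z : V) (k : K) :
  0 <= k -> (forall eps, 0 < eps -> `|z| <= k * eps) -> z = 0.
Proof.
move=> k0 h; apply/eqP; rewrite -normr_eq0; apply/negP => /negP nz.
have zp : 0 < `|z| by rewrite normr_gt0 -normr_eq0.
have k1 : 0 < k + 1 by apply: ltr_wpDl k0 ltr01.
have e0 : 0 < `|z| / (k + 1) by rewrite divr_gt0.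
have := h _ e0; rewrite mulrA => h1.
have h2 : k * `|z| / (k + 1) < `|z|.
  by rewrite ltr_pdivrMr // mulrDr mulr1 mulrC ltrDl.
by have := le_lt_trans h1 h2; rewrite ltxx.
Qed.


Section ClosedImage.
Variables (R : realType) (A Q : completeNormedModType R[i]) (K : set A) (q : A -> Q) (kr : R).
Hypothesis Kc : closed K.
Hypothesis K0 : K 0.
Hypothesis Klin : forall (k : R[i]) x y, K x -> K y -> K (k *: x + y).
Hypothesis qlin : forall (k : R[i]) a b, q (k *: a + b) = k *: q a + q b.
Hypothesis qn : forall a, `|q a| <= `|a|.
Hypothesis kr0 : 0 <= kr.
Hypothesis rep : forall x, K x -> exists x', [/\ K x', q x' = q x & `|x'| <= kr%:C * `|q x|].

Lemma closed_image : closed [set w | exists x, K x /\ q x = w].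
Proof.
have qD a b : q (a + b) = q a + q b by have := qlin 1 a b; rewrite !scale1r.
have qB a b : q (a - b) = q a - q b.
  by have := qlin (-1) b a; rewrite !scaleN1r addrC => ->; rewrite addrC.
have KD x y : K x -> K y -> K (x + y) by move=> Kx Ky; have := Klin 1 x y Kx Ky; rewrite scale1r.
have KB x y : K x -> K y -> K (x - y).
  by move=> Kx Ky; have := Klin (-1) y x Ky Kx; rewrite scaleN1r addrC.
move=> w cw.
pose rr n := ((2^-1 : R) ^+ n).
have rr0 n : 0 < rr n by rewrite exprn_gt0.
have rrS n : rr n.+1 = rr n / 2 by rewrite /rr exprS mulrC.
have ex_x : forall n, exists x, K x /\ `|w - q x| < (rr n)%:C.
  move=> n; have e0 : 0 < (rr n)%:C by rewrite ltcR.
  have [v [[x [Kx <-]] bv]] := cw _ (nbhsx_ballx w _ e0).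
  exists x; split => //; move: bv; by rewrite -ball_normE.
have /choice [x hx] := ex_x.
have ex_d : forall n, exists d, [/\ K d, q d = q (x n.+1 - x n)
   & `|d| <= kr%:C * `|q (x n.+1 - x n)|].
  by move=> n; apply: rep; apply: KB; [exact: (hx _).1 | exact: (hx _).1].
have /choice [d hd] := ex_d.
pose fix z n := if n is m.+1 then z m + d m else x 0%N.
have Kz n : K (z n).
  by elim: n => [|n IH] /=; [exact: (hx _).1 | apply: KD => //; case: (hd n)].
have qz n : q (z n) = q (x n).
  elim: n => [|n IH] //=; rewrite qD IH; case: (hd n) => _ -> _.
  by rewrite qB addrC subrK.
have dn n : `|d n| <= (2 * kr * rr n)%:C.
  case: (hd n) => _ _ h; apply: le_trans h _.
  have h1 : `|q (x n.+1 - x n)| <= (2 * rr n)%:C.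
    have E : q (x n.+1) - q (x n) = (w - q (x n)) - (w - q (x n.+1)).
      by rewrite opprB [RHS]addrC subrKA.
    rewrite qB E; apply: le_trans (ler_normB _ _) _.
    apply: le_trans (lerD (ltW (hx n).2) (ltW (hx n.+1).2)) _.
    rewrite -rCD lecR rrS; have := rr0 n; lra.
  have -> : 2 * kr * rr n = kr * (2 * rr n) by ring.
  rewrite rCM; apply: ler_wpM2l => //; by rewrite ler0c.
have zc N j : `|z (j + N)%N - z N| <= (4 * kr * (rr N - rr (j + N)))%:C.
  elim: j => [|j IH]; first by rewrite add0n subrr normr0 subrr mulr0.
  rewrite addSn /= addrAC.
  apply: le_trans (ler_normD _ _) _.
  apply: le_trans (lerD IH (dn _)) _.
  rewrite -rCD lecR rrS.
  have -> : 4 * kr * (rr N - rr (j + N)) + 2 * kr * rr (j + N) =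
            4 * kr * (rr N - rr (j + N) / 2) by field.
  done.
have zb N n : (N <= n)%N -> `|z N - z n| <= (4 * kr * rr N)%:C.
  move=> Nn; rewrite distrC -(subnK Nn).
  apply: le_trans (zc _ _) _; rewrite lecR.
  apply: ler_wpM2l; first by rewrite mulr_ge0.
  by rewrite lerBlDr lerDl ltW.
have cz : cvg (z @ \oo).
  apply/cauchy_cvgP/cauchy_exP => e e0.
  have e0' : 0 < complex.Re e by rewrite -ltcR ge0_ReC // ltW.
  have k1 : 0 < 4 * kr + 1 by have := kr0; lra.
  have [N hN] := @half_small R _ (divr_gt0 e0' k1).
  exists (z N); exists N => // n /= Nn.
  rewrite -ball_normE /=; apply: le_lt_trans (zb N n Nn) _.
  rewrite -(@ge0_ReC R _ (ltW e0)) ltcR.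
  have := hN N (leqnn N); rewrite -/(rr N) ltr_pdivlMr // => h.
  apply: le_lt_trans h; rewrite mulrDr mulr1 mulrC lerDl; exact: ltW.
have Kzl : K (lim (z @ \oo)).
  by apply: (closed_cvg _ Kc _ _ cz); apply: nearW.
exists (lim (z @ \oo)); split => //.
apply/eqP; rewrite eq_sym -subr_eq0; apply/eqP.
apply: (@nz_small _ _ _ 2) => // eps e0.
have [N1 _ h1] := (cvgrPdist_lt _ _).1 cz eps e0.
have e0' : 0 < complex.Re eps by rewrite -ltcR ge0_ReC // ltW.
have [N2 hN2] := @half_small R _ e0'.
pose n := maxn N1 N2.
have hz := h1 n (leq_maxl _ _).
have hr := hN2 n (leq_maxr _ _).
have E : w - q (lim (z @ \oo)) = (w - q (x n)) + q (z n - lim (z @ \oo)).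
  by rewrite qB qz addrA subrK.
rewrite E; apply: le_trans (ler_normD _ _) _.
rewrite mulr2n mulrDl mul1r; apply: lerD.
  apply: le_trans (ltW (hx n).2) _.
  by rewrite -(@ge0_ReC R _ (ltW e0)) lecR ltW.
apply: le_trans (qn _) _; rewrite distrC; exact: ltW.
Qed.
End ClosedImage.

Lemma abs_bound (F : numFieldType) (a b C : F) :
  0 <= a -> 0 <= b -> a <= C * b -> a <= `|C| * b.
Proof.
move=> a0 b0 h; have Cb : 0 <= C * b := le_trans a0 h.
by rewrite -[X in _ <= _ * X](ger0_norm b0) -normrM ger0_norm.
Qed.

Lemma natC (R : realType) n : ((n%:R : R)%:C = n%:R :> R[i]).
Proof.
elim: n => [//|n IH]; rewrite -natr1 -[in RHS]natr1 -IH.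
by apply/eqP; rewrite eq_complex /= addr0 !eqxx.
Qed.

Theorem theorem5p4 (R : realType)
    (A : completeNormedModType R[i]) (mulA : A -> A -> A)
    (I : set A)
    (Q : completeNormedModType R[i]) (mulQ : Q -> Q -> Q) (q : A -> Q) :
  is_banach_algebra mulA ->
  closed_ideal mulA I ->
  has_bai mulA I ->
  is_banach_algebra mulQ ->
  is_quotient_algebra mulA I mulQ q ->
  ideally_amenable_on mulA I ->
  ideally_amenable mulQ ->
  ideally_amenable mulA.
Proof.
move=> BA CI bai BQ quo amI amQ K CK D DD.
case: BA => massoc mlinl mlinr mnorm.
case: CI => _ [I0 Ilin] Icl Iid.
case: bai => Lt [le [e [[inhL lerefl] [letrans ledir] Ie [M eM] eapp]]].
case: quo => qlin qmul qsurj qker qnorm.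
case: CK => _ [K0 Klin] Kcl Kid.
case: DD => Ddual Dlin [CD DB0] Dder.
set m := mulA in massoc mlinl mlinr mnorm Iid Kid Dder eapp amI *.
have m0l c : m 0 c = 0.
  by have := mlinl (-1) 0 0 c; rewrite scaler0 addr0 scaleN1r addNr.
have m0r c : m c 0 = 0.
  by have := mlinr (-1) c 0 0; rewrite scaler0 addr0 scaleN1r addNr.
have mDl a b c : m (a + b) c = m a c + m b c.
  by have := mlinl 1 a b c; rewrite !scale1r.
have mDr a b c : m c (a + b) = m c a + m c b.
  by have := mlinr 1 c a b; rewrite !scale1r.
have mBl a b c : m (a - b) c = m a c - m b c.
  by have := mlinl (-1) b a c; rewrite !scaleN1r addrC => ->; rewrite addrC.
have mBr a b c : m c (a - b) = m c a - m c b.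
  by have := mlinr (-1) c b a; rewrite !scaleN1r addrC => ->; rewrite addrC.
have mZl k a c : m (k *: a) c = k *: m a c.
  by have := mlinl k a 0 c; rewrite !addr0 m0l addr0.
have mZr k a c : m c (k *: a) = k *: m c a.
  by have := mlinr k c a 0; rewrite !addr0 m0r addr0.
have ID x y : I x -> I y -> I (x + y).
  by move=> Ix Iy; have := Ilin 1 x y Ix Iy; rewrite scale1r.
have IB x y : I x -> I y -> I (x - y).
  by move=> Ix Iy; have := Ilin (-1) y x Iy Ix; rewrite scaleN1r addrC.
have KD x y : K x -> K y -> K (x + y).
  by move=> Kx Ky; have := Klin 1 x y Kx Ky; rewrite scale1r.
have KB x y : K x -> K y -> K (x - y).
  by move=> Kx Ky; have := Klin (-1) y x Ky Kx; rewrite scaleN1r addrC.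
have KZ k x : K x -> K (k *: x).
  by move=> Kx; have := Klin k x 0 Kx K0; rewrite addr0.
have KmL a x : K x -> K (m a x) by move=> Kx; exact: (Kid a x Logic.I Kx).1.
have KmR a x : K x -> K (m x a) by move=> Kx; exact: (Kid a x Logic.I Kx).2.
have ImL a x : I x -> I (m a x) by move=> Ix; exact: (Iid a x Logic.I Ix).1.
have ImR a x : I x -> I (m x a) by move=> Ix; exact: (Iid a x Logic.I Ix).2.
have DlinK a k x y : K x -> K y -> D a (k *: x + y) = k * D a x + D a y.
  by move=> Kx Ky; exact: (Ddual a Logic.I).1.
have DBx a x y : K x -> K y -> D a x - D a y = D a (x - y).
  move=> Kx Ky; have := DlinK a (-1) y x Ky Kx.
  have -> : (-1) *: y + x = x - y by rewrite scaleN1r addrC.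
  by move=> ->; ring.
have DBa a b x : K x -> D a x - D b x = D (a - b) x.
  move=> Kx; have := Dlin (-1) b a x Logic.I Logic.I Kx.
  have -> : (-1) *: b + a = a - b by rewrite scaleN1r addrC.
  by move=> ->; ring.
have DB a x : K x -> `|D a x| <= `|CD| * (`|a| * `|x|).
  move=> Kx; apply: abs_bound; rewrite ?mulr_ge0 // mulrA; exact: DB0.
pose Ld := K `&` I.
have LdK x : Ld x -> K x by case.
have LdI x : Ld x -> I x by case.
have cLd : closed_ideal_in m I Ld.
  split.
  - by move=> x [].
  - split; first by split.
    by move=> k x y [Kx Ix] [Ky Iy]; split; [exact: Klin | exact: Ilin].
  - exact: closedI.
  - by move=> a x Ia [Kx Ix]; split; split; auto.
have dLd : derivation_into_dual m I Ld D.
  split.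
  - move=> a Ia; split; first by move=> k x y [Kx _] [Ky _]; exact: DlinK.
    exists (`|CD| * `|a|) => x [Kx _]; rewrite -mulrA; exact: DB.
  - by move=> k a b x _ _ [Kx _]; exact: Dlin.
  - by exists CD => a x _ [Kx _]; exact: DB0.
  - by move=> a b x _ _ [Kx _]; exact: Dder.
have [f [[flin [Cf fB0]] fD]] := amI Ld cLd D dLd.
have fB u : Ld u -> `|f u| <= `|Cf| * `|u|.
  by move=> Lu; apply: abs_bound => //; exact: fB0.
have Ld0 : Ld 0 by split.
have Ldlin k x y : Ld x -> Ld y -> Ld (k *: x + y).
  by move=> [Kx Ix] [Ky Iy]; split; [exact: Klin | exact: Ilin].
have [g [glin gb gf]] := @complex_HB R A K Ld f `|Cf| K0 Klin Ld0
   Ldlin LdK flin (normr_ge0 _) fB.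
have fBB u v : Ld u -> Ld v -> f u - f v = f (u - v).
  move=> Lu Lv; have := flin (-1) v u Lv Lu.
  have -> : (-1) *: v + u = u - v by rewrite scaleN1r addrC.
  by move=> ->; ring.
have LdmR a x : K x -> I a -> Ld (m x a) by move=> Kx Ia; split; auto.
have LdmL a x : K x -> I a -> Ld (m a x) by move=> Kx Ia; split; auto.
have LdB u v : Ld u -> Ld v -> Ld (u - v).
  by move=> [Ku Iu] [Kv Iv]; split; [exact: KB | exact: IB].
have gI a x : I a -> K x -> D a x = g (m x a) - g (m a x).
  move=> Ia Kx; rewrite (gf _ (LdmR a x Kx Ia)) (gf _ (LdmL a x Kx Ia)).
  apply/eqP; rewrite -subr_eq0; apply/eqP.
  apply: (@nz_small _ _ _ (`|CD| * `|x| + `|Cf| * `|x| + `|Cf|)) => [|eps e0].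
    by rewrite !addr_ge0 ?mulr_ge0.
  have [l1 h1] := eapp a Ia eps e0.
  have [l2 h2] := eapp (m a x) (ImR x a Ia) eps e0.
  have [l3 [l13 l23]] := ledir l1 l2.
  have ha := (h1 l3 l13).1.
  have hax := (h2 l3 l23).1.
  set e3 := e l3 in ha hax *.
  have Ie3 : I e3 by exact: Ie.
  have key : D (m e3 a) x = f (m x (m e3 a)) - f (m e3 (m a x)).
    rewrite Dder // (fD a (m x e3) Ia (LdmR e3 x Kx Ie3)).
    rewrite (fD e3 (m a x) Ie3 (LdmL a x Kx Ia)) -!massoc; ring.
  have E : D a x - (f (m x a) - f (m a x)) =
     (D a x - D (m e3 a) x) + (f (m x (m e3 a)) - f (m x a))
       + (f (m a x) - f (m e3 (m a x))).
    by rewrite key; ring.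
  have Iea : I (m e3 a) by exact: ImR.
  have Ieax : I (m e3 (m a x)) by exact: ImR.
  have Lde : Ld (m e3 (m a x)) by split => //; apply: (KmL); apply: (KmL).
  rewrite E DBa // !fBB; try by [apply: LdmL | apply: LdmR | ].
  have t1 : `|D (a - m e3 a) x| <= `|CD| * `|x| * eps.
    apply: le_trans (DB _ _ Kx) _; rewrite -mulrA; apply: ler_wpM2l => //.
    rewrite mulrC; apply: ler_wpM2l => //; rewrite distrC; exact: ltW.
  have t2 : `|f (m x (m e3 a) - m x a)| <= `|Cf| * `|x| * eps.
    rewrite -mBr; apply: le_trans (fB _ _) _.
      split; first exact: KmR.
      by apply: ImL; apply: IB.
    rewrite -mulrA; apply: ler_wpM2l => //; apply: le_trans (mnorm _ _) _.
    apply: ler_wpM2l => //; exact: ltW.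
  have t3 : `|f (m a x - m e3 (m a x))| <= `|Cf| * eps.
    apply: le_trans (fB _ _) _.
      apply: LdB; first exact: LdmL.
      by apply: LdmL => //; apply: KmL.
    apply: ler_wpM2l => //; rewrite distrC; exact: ltW.
  apply: le_trans (ler_normD _ _) _.
  apply: le_trans (lerD (ler_normD _ _) (lexx _)) _.
  rewrite !mulrDl; apply: lerD; last exact: t3.
  by apply: lerD.
pose D' a x := D a x - (g (m x a) - g (m a x)).
have D'lin_a k a b x : K x -> D' (k *: a + b) x = k * D' a x + D' b x.
  move=> Kx; rewrite /D' Dlin // mlinr mlinl.
  rewrite (glin _ _ _ (KmR _ _ Kx) (KmR _ _ Kx)) (glin _ _ _ (KmL _ _ Kx) (KmL _ _ Kx)).
  ring.
have D'lin_x a k x y : K x -> K y -> D' a (k *: x + y) = k * D' a x + D' a y.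
  move=> Kx Ky; rewrite /D' DlinK // mlinl mlinr.
  rewrite (glin _ _ _ (KmR a _ Kx) (KmR a _ Ky)) (glin _ _ _ (KmL a _ Kx) (KmL a _ Ky)).
  ring.
have D'Bx a x y : K x -> K y -> D' a x - D' a y = D' a (x - y).
  move=> Kx Ky; have := D'lin_x a (-1) y x Ky Kx.
  have -> : (-1) *: y + x = x - y by rewrite scaleN1r addrC.
  by move=> ->; ring.
have D'Ba a b x : K x -> D' a x - D' b x = D' (a - b) x.
  move=> Kx; have := D'lin_a (-1) b a x Kx.
  have -> : (-1) *: b + a = a - b by rewrite scaleN1r addrC.
  by move=> ->; ring.
pose C' := `|CD| + `|Cf| + `|Cf|.
have C'0 : 0 <= C' by rewrite /C' !addr_ge0.
have gm1 a x : K x -> `|g (m x a)| <= `|Cf| * (`|a| * `|x|).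
  move=> Kx; apply: le_trans (gb _ (KmR a x Kx)) _; apply: ler_wpM2l => //.
  by rewrite mulrC; exact: mnorm.
have gm2 a x : K x -> `|g (m a x)| <= `|Cf| * (`|a| * `|x|).
  move=> Kx; apply: le_trans (gb _ (KmL a x Kx)) _; by apply: ler_wpM2l => //; exact: mnorm.
have D'B a x : K x -> `|D' a x| <= C' * (`|a| * `|x|).
  move=> Kx; rewrite /D' /C' !mulrDl.
  apply: le_trans (ler_normB _ _) _; rewrite -addrA; apply: lerD; first exact: DB.
  apply: le_trans (ler_normB _ _) _; apply: lerD; [exact: gm1 | exact: gm2].
have D'der a b x : K x -> D' (m a b) x = D' b (m x a) + D' a (m b x).
  move=> Kx; rewrite /D' Dder // !massoc; ring.
have D'I a x : I a -> K x -> D' a x = 0 by move=> Ia Kx; rewrite /D' gI // subrr.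
have D'Ld a x : Ld x -> D' a x = 0.
  move=> [Kx Ix]; apply: (@nz_small _ _ _ (C' * `|a|)) => [|eps e0].
    by rewrite mulr_ge0.
  have [l h] := eapp x Ix eps e0.
  have hx := (h l (lerefl l)).1.
  have z0 : D' a (m (e l) x) = 0.
    have := D'der a (e l) x Kx.
    rewrite (D'I (m a (e l)) x (ImL _ _ (Ie l)) Kx).
    by rewrite (D'I (e l) (m x a) (Ie l) (KmR _ _ Kx)) add0r => <-.
  rewrite -[D' a x]subr0 -z0 D'Bx //; last exact: KmL.
  apply: le_trans (D'B _ _ (KB _ _ Kx (KmL _ _ Kx))) _.
  rewrite -mulrA; apply: ler_wpM2l => //; apply: ler_wpM2l => //.
  rewrite distrC; exact: ltW.
have qI a : I a -> q a = 0 := (qker a).2.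
have Iq a : q a = 0 -> I a := (qker a).1.
have q0 : q 0 = 0 by exact: qI.
have qD a b : q (a + b) = q a + q b by have := qlin 1 a b; rewrite !scale1r.
have qB a b : q (a - b) = q a - q b.
  by have := qlin (-1) b a; rewrite !scaleN1r addrC => ->; rewrite addrC.
have qZ k a : q (k *: a) = k *: q a by have := qlin k a 0; rewrite !addr0 q0 addr0.
have qn a : `|q a| <= `|a| by have := (qnorm a).1 0 I0; rewrite addr0.
have M0 : 0 <= M by case: inhL => l0; exact: le_trans (normr_ge0 _) (eM l0).
pose kr : R := 3 + 2 * complex.Re M.
have kr0 : 0 <= kr.
  rewrite /kr addr_ge0 // mulr_ge0 //; rewrite -lecR ge0_ReC //.
have krC : kr%:C = 3 + 2 * M.
  by rewrite /kr rCD rCM ge0_ReC // !natC.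
have REP x : K x -> exists x', [/\ K x', q x' = q x & `|x'| <= kr%:C * `|q x|].
  move=> Kx; have [qx0|qxn0] := eqVneq (q x) 0.
    exists 0; split => //; first by rewrite q0.
    by rewrite normr0 mulr_ge0 // ler0c.
  have nq : 0 < `|q x| by rewrite normr_gt0.
  have [y [Iy hy]] := (qnorm x).2 _ nq.
  have [l hl] := eapp y Iy _ nq.
  have hey := (hl l (lerefl l)).1.
  have Iex : I (m (e l) x) by exact: ImR.
  exists (x - m (e l) x); split.
  - by apply: KB => //; exact: KmL.
  - by rewrite qB (qI _ Iex) subr0.
  have E : x - m (e l) x = (x + y) - m (e l) (x + y) + (m (e l) y - y).
    by rewrite mDr opprD !addrA subrK addrAC addrK.
  rewrite E; apply: le_trans (ler_normD _ _) _.
  apply: le_trans (lerD (ler_normB _ _) (ltW hey)) _.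
  have hm : `|m (e l) (x + y)| <= M * `|x + y|.
    apply: le_trans (mnorm _ _) _; apply: ler_wpM2r => //.
  have hxy : `|x + y| <= 2 * `|q x| by rewrite mulr2n mulrDl mul1r ltW.
  apply: le_trans (lerD (lerD hxy (le_trans hm (ler_wpM2l M0 hxy))) (lexx _)) _.
  by rewrite krC; have -> : (3 + 2 * M) * `|q x| = 2 * `|q x| + M * (2 * `|q x|) + `|q x| by ring.
pose KQ := [set w | exists x, K x /\ q x = w].
have KQc : closed KQ := @closed_image R A Q K q kr Kcl Klin qlin qn kr0 REP.
have cKQ : closed_ideal_in mulQ setT KQ.
  split => //.
  - split; first by exists 0; split => //; rewrite q0.
    move=> k _ _ [x1 [K1 <-]] [x2 [K2 <-]]; exists (k *: x1 + x2); split.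
      exact: Klin.
    by rewrite qlin.
  - move=> u _ _ [x [Kx <-]]; have [a <-] := qsurj u.
    by split; [exists (m a x) | exists (m x a)]; rewrite qmul; split => //; auto.
pose pre u := xget 0 [set a | q a = u].
have preP u : q (pre u) = u.
  by have [a qa] := qsurj u; exact: (@xgetPex _ 0 [set a | q a = u] (ex_intro _ a qa)).
pose preK v := xget 0 [set x | K x /\ q x = v].
have prePK v : KQ v -> K (preK v) /\ q (preK v) = v.
  by move=> [x hx]; exact: (@xgetPex _ 0 [set x | K x /\ q x = v] (ex_intro _ x hx)).
pose DQ u v := D' (pre u) (preK v).
have xinv a x y : K x -> K y -> q x = q y -> D' a x = D' a y.
  move=> Kx Ky qxy; apply/eqP; rewrite -subr_eq0 D'Bx //; apply/eqP.
  by apply: D'Ld; split; [exact: KB | apply: Iq; rewrite qB qxy subrr].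
have ainv a b x : K x -> q a = q b -> D' a x = D' b x.
  move=> Kx qab; apply/eqP; rewrite -subr_eq0 D'Ba //; apply/eqP.
  by apply: D'I => //; apply: Iq; rewrite qB qab subrr.
have DQq u x : K x -> DQ u (q x) = D' (pre u) x.
  move=> Kx; have [Kx' qx'] := prePK (q x) (ex_intro _ x (conj Kx erefl)).
  exact: xinv.
have DQqq a x : K x -> DQ (q a) (q x) = D' a x.
  by move=> Kx; rewrite DQq // (ainv _ a) // preP.
pose CQ := C' * 2 * kr%:C.
have DQB u v : KQ v -> `|DQ u v| <= CQ * `|u| * `|v|.
  move=> [x0 [Kx0 <-]].
  have [x [Kx qx hx]] := REP x0 Kx0.
  rewrite -qx in hx *; rewrite DQq //.
  have [->|un0] := eqVneq u 0.
    rewrite D'I //; last by apply: Iq; rewrite preP.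
    by rewrite normr0 normr0 mulr0 mul0r.
  have nu : 0 < `|u| by rewrite normr_gt0.
  have [y [Iy hy]] := (qnorm (pre u)).2 _ nu.
  rewrite preP in hy.
  rewrite (ainv _ (pre u + y)) //; last by rewrite qD (qI y Iy) addr0.
  apply: le_trans (D'B _ _ Kx) _.
  have -> : CQ * `|u| * `|q x| = C' * ((2 * `|u|) * (kr%:C * `|q x|)) by rewrite /CQ; ring.
  apply: ler_wpM2l => //; apply: ler_pM => //.
  by rewrite mulr2n mulrDl mul1r ltW.
have dDQ : derivation_into_dual mulQ setT KQ DQ.
  split.
  - move=> u _; split.
      move=> k v1 v2 [x1 [K1 <-]] [x2 [K2 <-]].
      by rewrite -qlin !DQq //; [exact: D'lin_x | exact: Klin].
    by exists (CQ * `|u|) => v Kv; exact: DQB.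
  - move=> k u1 u2 v _ _ [x [Kx <-]]; rewrite !DQq //.
    rewrite (ainv _ (k *: pre u1 + pre u2)) //; first exact: D'lin_a.
    by rewrite qlin !preP.
  - by exists CQ => u v _ Kv; exact: DQB.
  - move=> u1 u2 v _ _ [x [Kx <-]].
    rewrite -(preP u1) -(preP u2) -!qmul.
    rewrite !DQqq //; [exact: D'der | exact: KmL | exact: KmR].
have [h [[hlin [Ch hB0]] hD]] := amQ KQ cKQ DQ dDQ.
have KQq x : K x -> KQ (q x) by move=> Kx; exists x.
have hB v : KQ v -> `|h v| <= `|Ch| * `|v|.
  by move=> Kv; apply: abs_bound => //; exact: hB0.
exists (fun x => g x + h (q x)); split.
- split.
    move=> k x y Kx Ky /=; rewrite glin // qlin hlin; try by apply: KQq.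
    ring.
  exists (`|Cf| + `|Ch|) => x Kx.
  apply: le_trans (ler_normD _ _) _; rewrite mulrDl; apply: lerD.
    exact: gb.
  apply: le_trans (hB _ (KQq _ Kx)) _; apply: ler_wpM2l => //.
- move=> a x _ Kx /=.
  have -> : D a x = D' a x + (g (m x a) - g (m a x)) by rewrite /D'; ring.
  rewrite -(DQqq a x Kx) hD; try by [|exact: KQq].
  rewrite -!qmul; ring.
Qed.
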